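(* Let $p,q$ be integers with $0<p<q$. There exists a set $A\subseteq\mathbb{N}$ such that $$\sum_{n=0}^N R_A(n)=0.5\frac{p^2}{q^2}N^2+1.5\frac{p^2}{q^2}N+O\big(\sqrt{N}\log^{1/2}N\big)\quad (N\to\infty).$$
   Context: $\mathbb{N}$ denotes the set of non-negative integers. For $A\subseteq\mathbb{N}$, $R_A(n)$ denotes the number of ordered pairs $(a,a')$ with $a,a'\in A$ and $a+a'=n$. *)

(* Defs.v *)
From Stdlib Require Import Reals Lra Lia ZArith Arith List.
Open Scope R_scope.

(* R_A(n) = number of ordered pairs (a, a') with a, a' in A and a + a' = n,
   i.e. the number of a in {0,...,n} with a in A and n - a in A. *)
Definition RA (A : nat -> bool) (n : nat) : nat :=
  length (filter (fun a => andb (A a) (A (n - a)%nat)) (seq 0 (S n))).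

(* sum_{n=0}^N R_A(n), as a real number (sum_f_R0 f N = f 0 + ... + f N). *)
Definition sumRA (A : nat -> bool) (N : nat) : R :=
  sum_f_R0 (fun n => INR (RA A n)) N.

(* Main.v *)
Require Import Defs.
From Stdlib Require Import Reals ZArith Lra Lia List.
From Stdlib Require Import IndefiniteDescription.
Open Scope R_scope.

Fixpoint sm (f : nat -> R) (n : nat) : R :=
  match n with O => 0 | S n' => sm f n' + f n' end.

Lemma sm_S f n : sm f (S n) = sm f n + f n.
Proof. reflexivity. Qed.

Lemma sm_ext f g n : (forall i, (i < n)%nat -> f i = g i) -> sm f n = sm g n.
Proof.
  induction n; intros H; simpl; auto.
  rewrite IHn by (intros; apply H; lia). rewrite H by lia. auto.
Qed.

Lemma sm_plus f g n : sm (fun i => f i + g i) n = sm f n + sm g n.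
Proof. induction n; simpl; [lra| rewrite IHn; lra]. Qed.

Lemma sm_minus f g n : sm (fun i => f i - g i) n = sm f n - sm g n.
Proof. induction n; simpl; [lra| rewrite IHn; lra]. Qed.

Lemma sm_scal c f n : sm (fun i => c * f i) n = c * sm f n.
Proof. induction n; simpl; [lra| rewrite IHn; lra]. Qed.

Lemma sm_const c n : sm (fun _ => c) n = INR n * c.
Proof. induction n; simpl sm; [simpl; lra| rewrite IHn, S_INR; lra]. Qed.

Lemma sm_zero f n : (forall i, (i < n)%nat -> f i = 0) -> sm f n = 0.
Proof. intros H. rewrite (sm_ext f (fun _ => 0)) by auto. rewrite sm_const; lra. Qed.

Lemma sm_split f m n : sm f (m + n) = sm f m + sm (fun i => f (m + i)%nat) n.
Proof.
  induction n; simpl.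
  - rewrite Nat.add_0_r; lra.
  - rewrite Nat.add_succ_r; simpl; rewrite IHn; lra.
Qed.

Lemma sm_shift f n : sm f (S n) = f O + sm (fun i => f (S i)) n.
Proof.
  induction n; simpl; [lra|]. simpl in IHn. rewrite IHn. lra.
Qed.

Lemma sm_swap (f : nat -> nat -> R) n m :
  sm (fun i => sm (fun j => f i j) m) n = sm (fun j => sm (fun i => f i j) n) m.
Proof.
  induction n; simpl.
  - rewrite sm_zero; auto.
  - rewrite IHn. rewrite <- sm_plus. reflexivity.
Qed.

Lemma sm_le f g n : (forall i, (i < n)%nat -> f i <= g i) -> sm f n <= sm g n.
Proof.
  induction n; intros H; simpl; [lra|].
  assert (sm f n <= sm g n) by (apply IHn; intros; apply H; lia).
  assert (f n <= g n) by (apply H; lia). lra.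
Qed.

Lemma sm_abs f n : Rabs (sm f n) <= sm (fun i => Rabs (f i)) n.
Proof.
  induction n; simpl.
  - rewrite Rabs_R0; lra.
  - eapply Rle_trans; [apply Rabs_triang|]. lra.
Qed.

Lemma sm_bound f n b : (forall i, (i < n)%nat -> Rabs (f i) <= b) -> Rabs (sm f n) <= INR n * b.
Proof.
  intros H. eapply Rle_trans; [apply sm_abs|]. rewrite <- sm_const. apply sm_le; auto.
Qed.

Lemma sm_nonneg f n : (forall i, (i < n)%nat -> 0 <= f i) -> 0 <= sm f n.
Proof.
  intros H. apply Rle_trans with (sm (fun _ => 0) n). rewrite sm_const; lra. apply sm_le; auto.
Qed.

Lemma sm_term_le f n k : (forall i, (i < n)%nat -> 0 <= f i) -> (k < n)%nat -> f k <= sm f n.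
Proof.
  intros H Hk. replace n with (S k + (n - S k))%nat by lia.
  rewrite sm_split. simpl.
  assert (0 <= sm f k) by (apply sm_nonneg; intros; apply H; lia).
  assert (0 <= sm (fun i => f (S (k + i))) (n - S k)) by (apply sm_nonneg; intros; apply H; lia).
  lra.
Qed.

Lemma sm_rev f n : sm (fun i => f (n - 1 - i)%nat) n = sm f n.
Proof.
  induction n.
  - reflexivity.
  - rewrite sm_shift. rewrite (sm_ext _ (fun i => f (n - 1 - i)%nat)) by (intros; f_equal; lia).
    rewrite IHn. replace (S n - 1 - 0)%nat with n by lia. simpl. lra.
Qed.

Lemma sm_prefix f n d N :
  sm (fun a => if (a + d <=? N)%nat then f a else 0) n = sm f (Nat.min n (N + 1 - d)).
Proof.
  induction n.
  - reflexivity.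
  - rewrite sm_S. rewrite IHn. destruct (Nat.leb_spec (n + d) N).
    + rewrite (Nat.min_l (S n)) by lia. rewrite (Nat.min_l n) by lia. reflexivity.
    + replace (Nat.min (S n) (N + 1 - d)) with (Nat.min n (N + 1 - d)) by lia. lra.
Qed.

Lemma sm_single f n k : (forall i, (i < n)%nat -> i <> k -> f i = 0) ->
  Rabs (sm f n) <= Rabs (f k).
Proof.
  induction n; intros H; simpl.
  - rewrite Rabs_R0; apply Rabs_pos.
  - destruct (Nat.eq_dec n k).
    + subst. rewrite sm_zero by (intros; apply H; lia). rewrite Rplus_0_l; lra.
    + rewrite (H n) by lia. rewrite Rplus_0_r. apply IHn. intros; apply H; lia.
Qed.

Lemma sm_rot (g : nat -> R) q u : (0 < q)%nat ->
  sm (fun x => g ((x + u) mod q)%nat) q = sm g q.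
Proof.
  intros Hq. induction u.
  - apply sm_ext. intros. rewrite Nat.add_0_r. rewrite Nat.mod_small; auto.
  - rewrite <- IHu.
    assert (E: forall G : nat -> R, G q = G O -> sm (fun x => G (S x)) q = sm G q).
    { intros G HG. destruct q; [lia|]. rewrite (sm_shift G). rewrite sm_S. rewrite HG. lra. }
    rewrite <- (E (fun x => g ((x + u) mod q)%nat)).
    + apply sm_ext; intros; f_equal; f_equal; lia.
    + simpl. f_equal. replace (q + u)%nat with (u + 1 * q)%nat by lia.
      rewrite Nat.Div0.mod_add. reflexivity.
Qed.

Lemma sm_count p n : sm (fun x => if (x <? p)%nat then 1 else 0) n = INR (Nat.min n p).
Proof.
  induction n; simpl sm; [reflexivity|]. rewrite IHn.
  destruct (Nat.ltb_spec n p).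
  - replace (Nat.min (S n) p) with (S (Nat.min n p)) by lia. rewrite S_INR; lra.
  - replace (Nat.min (S n) p) with (Nat.min n p) by lia. lra.
Qed.

Lemma sum_f_R0_sm f N : sum_f_R0 f N = sm f (S N).
Proof. induction N; simpl; [lra|]. simpl in IHN. rewrite IHN. lra. Qed.

Definition hh (p q u y : nat) : bool := ((y + u) mod q <? p)%nat.
Definition pat (p q u x : nat) : bool :=
  if (x <? q)%nat then hh p q u x else hh p q u (2*q - 1 - x).
Definition Aset (p q : nat) (s : nat -> nat) (a : nat) : bool :=
  pat p q (s (a / (2*q))%nat) (a mod (2*q))%nat.
Definition al (p q : nat) : R := INR p / INR q.
Definition ind (b : bool) : R := if b then 1 else 0.
Definition ee p q s a : R := ind (Aset p q s a) - al p q.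

Lemma Aset_blk p q s K x : (0 < q)%nat -> (x < 2*q)%nat ->
  Aset p q s (K*(2*q) + x) = pat p q (s K) x.
Proof.
  intros Hq Hx. unfold Aset.
  rewrite Nat.div_add_l by lia. rewrite Nat.div_small by lia. rewrite Nat.add_0_r.
  rewrite Nat.add_comm, Nat.Div0.mod_add. rewrite Nat.mod_small by lia. reflexivity.
Qed.

Lemma hh_count p q u : (0 < q)%nat -> (p <= q)%nat ->
  sm (fun y => ind (hh p q u y)) q = INR p.
Proof.
  intros Hq Hp. unfold hh.
  rewrite (sm_rot (fun z => ind (z <? p)%nat) q u Hq).
  unfold ind. rewrite sm_count. f_equal. lia.
Qed.

Lemma hh_mean p q y : (0 < q)%nat -> (p <= q)%nat ->
  sm (fun u => ind (hh p q u y)) q = INR p.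
Proof.
  intros Hq Hp. unfold hh.
  rewrite (sm_ext _ (fun u => ind ((u + y) mod q <? p)%nat)) by (intros; rewrite Nat.add_comm; auto).
  rewrite (sm_rot (fun z => ind (z <? p)%nat) q y Hq).
  unfold ind. rewrite sm_count. f_equal. lia.
Qed.

Lemma pat_count p q u : (0 < q)%nat -> (p <= q)%nat ->
  sm (fun x => ind (pat p q u x)) (2*q) = 2 * INR p.
Proof.
  intros Hq Hp. replace (2*q)%nat with (q + q)%nat by lia. rewrite sm_split.
  rewrite (sm_ext _ (fun x => ind (hh p q u x))) by (intros; unfold pat; destruct (Nat.ltb_spec i q); auto; lia).
  rewrite (sm_ext (fun i => ind (pat p q u (q + i))) (fun i => ind (hh p q u (q - 1 - i)))).
  - rewrite (sm_rev (fun i => ind (hh p q u i))). rewrite hh_count by auto. lra.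
  - intros i Hi. unfold pat. destruct (Nat.ltb_spec (q+i) q); [lia|]. f_equal. f_equal. lia.
Qed.

Lemma pat_mean p q x : (0 < q)%nat -> (p <= q)%nat ->
  sm (fun u => ind (pat p q u x)) q = INR p.
Proof.
  intros Hq Hp. unfold pat. destruct (x <? q)%nat; apply hh_mean; auto.
Qed.

Lemma pat_sym p q u x : (x < 2*q)%nat -> pat p q u (2*q - 1 - x) = pat p q u x.
Proof.
  intros Hx. unfold pat.
  destruct (Nat.ltb_spec (2*q-1-x) q); destruct (Nat.ltb_spec x q); try lia; f_equal; lia.
Qed.

Lemma al_q p q : (0 < q)%nat -> INR q * al p q = INR p.
Proof.
  intros Hq. unfold al. assert (0 < INR q) by (apply lt_0_INR; auto). field. lra.
Qed.

Lemma al_bounds p q : (0 < q)%nat -> (p <= q)%nat -> 0 <= al p q <= 1.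
Proof.
  intros Hq Hp. unfold al. assert (0 < INR q) by (apply lt_0_INR; auto).
  assert (INR p <= INR q) by (apply le_INR; auto). assert (0 <= INR p) by apply pos_INR.
  split. apply Rmult_le_pos; auto. left; apply Rinv_0_lt_compat; auto.
  apply Rmult_le_reg_r with (INR q); auto. unfold Rdiv. rewrite Rmult_assoc, Rinv_l by lra. lra.
Qed.

Lemma ee_bound p q s a : (0 < q)%nat -> (p <= q)%nat -> Rabs (ee p q s a) <= 1.
Proof.
  intros Hq Hp. pose proof (al_bounds p q Hq Hp). unfold ee, ind.
  destruct (Aset p q s a); apply Rabs_le; lra.
Qed.

Lemma block_sum p q s K : (0 < q)%nat -> (p <= q)%nat ->
  sm (fun x => ee p q s (K*(2*q) + x)) (2*q) = 0.
Proof.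
  intros Hq Hp. unfold ee. rewrite sm_minus.
  rewrite (sm_ext _ (fun x => ind (pat p q (s K) x))) by (intros; rewrite Aset_blk; auto).
  rewrite pat_count by auto. rewrite sm_const. rewrite mult_INR.
  pose proof (al_q p q Hq). simpl (INR 2). lra.
Qed.

Lemma block_moment p q s K : (0 < q)%nat -> (p <= q)%nat ->
  sm (fun x => INR x * ee p q s (K*(2*q) + x)) (2*q) = 0.
Proof.
  intros Hq Hp.
  set (f := fun x => INR x * ee p q s (K*(2*q) + x)).
  assert (H: sm f (2*q) = sm (fun x => INR (2*q-1) * ee p q s (K*(2*q)+x)) (2*q) - sm f (2*q)).
  { rewrite <- (sm_rev f) at 1. rewrite <- sm_minus. apply sm_ext. intros i Hi. unfold f.
    assert (ee p q s (K*(2*q) + (2*q-1-i)) = ee p q s (K*(2*q)+i)).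
    { unfold ee. rewrite !Aset_blk by (auto; lia). rewrite pat_sym by lia. auto. }
    rewrite H. rewrite minus_INR by lia. rewrite minus_INR by lia. ring. }
  rewrite sm_scal in H. rewrite block_sum in H by auto. lra.
Qed.

Lemma Pre_blk p q s K : (0 < q)%nat -> (p <= q)%nat -> sm (ee p q s) (K*(2*q)) = 0.
Proof.
  intros Hq Hp. induction K.
  - reflexivity.
  - replace (S K * (2*q))%nat with (K*(2*q) + 2*q)%nat by lia. rewrite sm_split.
    rewrite IHK, block_sum by auto. lra.
Qed.

Lemma Pre_bound p q s n : (0 < q)%nat -> (p <= q)%nat -> Rabs (sm (ee p q s) n) <= INR (2*q).
Proof.
  intros Hq Hp.
  assert (Hn: n = ((n / (2*q)) * (2*q) + n mod (2*q))%nat).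
  { rewrite Nat.mul_comm. apply Nat.div_mod. lia. }
  rewrite Hn. rewrite sm_split. rewrite Pre_blk by auto. rewrite Rplus_0_l.
  eapply Rle_trans. apply sm_bound. intros. apply ee_bound; auto.
  rewrite Rmult_1_r. apply le_INR. apply Nat.lt_le_incl. apply Nat.mod_upper_bound. lia.
Qed.

Definition W p q s n := sm (fun a => ee p q s a * INR (n - a)) n.

Lemma W_add p q s m r : W p q s (m + r) =
  W p q s m + INR r * sm (ee p q s) m + sm (fun x => ee p q s (m + x) * INR (r - x)) r.
Proof.
  unfold W. rewrite sm_split.
  rewrite (sm_ext (fun a => ee p q s a * INR (m + r - a)) (fun a => ee p q s a * INR (m - a) + INR r * ee p q s a)).
  - rewrite sm_plus, sm_scal. rewrite (sm_ext (fun i => ee p q s (m + i) * INR (m + r - (m + i))) (fun x => ee p q s (m + x) * INR (r - x))).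
    + lra.
    + intros. f_equal. f_equal. lia.
  - intros i Hi. replace (m + r - i)%nat with ((m - i) + r)%nat by lia. rewrite plus_INR. ring.
Qed.

Lemma W_blk p q s K : (0 < q)%nat -> (p <= q)%nat -> W p q s (K*(2*q)) = 0.
Proof.
  intros Hq Hp. induction K.
  - reflexivity.
  - replace (S K * (2*q))%nat with (K*(2*q) + 2*q)%nat by lia. rewrite W_add.
    rewrite IHK, Pre_blk by auto.
    rewrite (sm_ext _ (fun x => INR (2*q) * ee p q s (K*(2*q) + x) - INR x * ee p q s (K*(2*q)+x))).
    + rewrite sm_minus, sm_scal, block_sum, block_moment by auto. lra.
    + intros. rewrite minus_INR by lia. ring.
Qed.

Lemma W_bound p q s n : (0 < q)%nat -> (p <= q)%nat -> Rabs (W p q s n) <= INR (2*q) * INR (2*q).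
Proof.
  intros Hq Hp.
  assert (Hn: n = ((n / (2*q)) * (2*q) + n mod (2*q))%nat).
  { rewrite Nat.mul_comm. apply Nat.div_mod. lia. }
  assert (Hr: (n mod (2*q) < 2*q)%nat) by (apply Nat.mod_upper_bound; lia).
  rewrite Hn. rewrite W_add. rewrite W_blk, Pre_blk by auto. rewrite Rmult_0_r, !Rplus_0_l.
  eapply Rle_trans. apply sm_bound with (b := INR (2*q)).
  - intros i Hi. rewrite Rabs_mult. rewrite (Rabs_right (INR _)) by (apply Rle_ge, pos_INR).
    pose proof (ee_bound p q s (n / (2 * q) * (2 * q) + i) Hq Hp).
    assert (INR (n mod (2 * q) - i) <= INR (2*q)) by (apply le_INR; lia).
    assert (0 <= INR (n mod (2 * q) - i)) by apply pos_INR.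
    pose proof (Rabs_pos (ee p q s (n / (2 * q) * (2 * q) + i))). nra.
  - apply Rmult_le_compat_r. apply pos_INR. apply le_INR. lia.
Qed.

Lemma W_S p q s n : W p q s (S n) = W p q s n + sm (ee p q s) (S n).
Proof.
  replace (S n) with (n + 1)%nat by lia. rewrite W_add. simpl. rewrite Nat.add_0_r.
  replace (n+1)%nat with (S n) by lia. simpl. lra.
Qed.

Definition Tri (f : nat -> nat -> R) N := sm (fun a => sm (fun b => f a b) (N + 1 - a)) (N + 1).

Lemma Tri_plus f g N : Tri (fun a b => f a b + g a b) N = Tri f N + Tri g N.
Proof. unfold Tri. rewrite <- sm_plus. apply sm_ext. intros. apply sm_plus. Qed.

Lemma Tri_scal c f N : Tri (fun a b => c * f a b) N = c * Tri f N.
Proof. unfold Tri. rewrite <- sm_scal. apply sm_ext. intros. apply sm_scal. Qed.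

Lemma Tri_one N : Tri (fun _ _ => 1) N = INR (N+1) * INR (N+2) / 2.
Proof.
  unfold Tri. rewrite (sm_ext _ (fun a => INR (N + 1 - a))) by (intros; rewrite sm_const; lra).
  rewrite <- (sm_rev (fun a => INR (N + 1 - a))).
  rewrite (sm_ext _ (fun i => INR i + 1)).
  - assert (H: forall n, sm (fun i => INR i + 1) n = INR n * (INR n + 1) / 2).
    { induction n. simpl; lra. rewrite sm_S, IHn, S_INR. field. }
    rewrite H. replace (N+2)%nat with (N + 1 + 1)%nat by lia. rewrite (plus_INR (N+1) 1). simpl. lra.
  - intros. rewrite <- S_INR. f_equal. lia.
Qed.

Lemma Tri_left p q s N : Tri (fun a _ => ee p q s a) N = W p q s (N + 1).
Proof. unfold Tri, W. apply sm_ext. intros. rewrite sm_const. ring. Qed.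

Lemma Tri_right p q s N : Tri (fun _ b => ee p q s b) N = W p q s (N + 1).
Proof.
  unfold Tri. rewrite <- (sm_rev (fun a => sm (fun b => ee p q s b) (N + 1 - a))).
  rewrite (sm_ext _ (fun i => sm (ee p q s) (S i))) by (intros; f_equal; lia).
  generalize (N+1)%nat. intros n. induction n. reflexivity.
  rewrite sm_S, IHn, W_S. reflexivity.
Qed.

Definition Qb p q s n N :=
  sm (fun a => sm (fun b => if (b + a <=? N)%nat then ee p q s a * ee p q s b else 0) n) n.

Lemma Tri_Qb p q s N n : (N + 1 <= n)%nat ->
  Tri (fun a b => ee p q s a * ee p q s b) N = Qb p q s n N.
Proof.
  intros Hn. unfold Qb, Tri.
  rewrite (sm_ext (fun a => sm _ n) (fun a => sm (fun b => ee p q s a * ee p q s b) (N + 1 - a))).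
  - replace n with ((N+1) + (n - (N+1)))%nat by lia. rewrite (sm_split _ (N+1) (n - (N+1))).
    rewrite (sm_zero (fun i => sm (fun b => ee p q s (N+1+i)%nat * ee p q s b) (N + 1 - (N + 1 + i)))). lra.
    intros. replace (N + 1 - (N + 1 + i))%nat with O by lia. reflexivity.
  - intros a Ha. rewrite (sm_prefix (fun b => ee p q s a * ee p q s b)). f_equal. lia.
Qed.

Definition Inc p q s K N :=
  sm (fun x => ee p q s (K*(2*q) + x) *
     sm (fun a => if (a + (K*(2*q) + x) <=? N)%nat then ee p q s a else 0) (K*(2*q))) (2*q).

Definition Dg p q s K N :=
  sm (fun x => sm (fun y => if ((K*(2*q) + y) + (K*(2*q) + x) <=? N)%nat
        then ee p q s (K*(2*q) + x) * ee p q s (K*(2*q) + y) else 0) (2*q)) (2*q).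

Lemma if_mult (c : bool) u v : (if c then u * v else 0) = u * (if c then v else 0).
Proof. destruct c; ring. Qed.

Lemma Qb_step p q s K N :
  Qb p q s (S K * (2*q)) N = Qb p q s (K * (2*q)) N + 2 * Inc p q s K N + Dg p q s K N.
Proof.
  unfold Qb, Inc, Dg. set (m := (K*(2*q))%nat). set (L := (2*q)%nat).
  replace (S K * L)%nat with (m + L)%nat by (unfold m, L; lia).
  rewrite sm_split.
  rewrite (sm_ext (fun a => sm _ (m + L)) (fun a => sm (fun b => if (b + a <=? N)%nat then ee p q s a * ee p q s b else 0) m + sm (fun y => if (m + y + a <=? N)%nat then ee p q s a * ee p q s (m+y) else 0) L))
    by (intros; apply sm_split).
  rewrite sm_plus.
  rewrite (sm_ext (fun i => sm _ (m + L)) (fun x => sm (fun b => if (b + (m + x) <=? N)%nat then ee p q s (m+x) * ee p q s b else 0) m + sm (fun y => if (m + y + (m + x) <=? N)%nat then ee p q s (m + x) * ee p q s (m+y) else 0) L))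
    by (intros; apply sm_split).
  rewrite sm_plus.
  rewrite (sm_swap (fun a y => if (m + y + a <=? N)%nat then ee p q s a * ee p q s (m+y) else 0) m L).
  assert (E1: sm (fun j => sm (fun i => if (m + j + i <=? N)%nat then ee p q s i * ee p q s (m + j) else 0) m) L
    = sm (fun x => ee p q s (m + x) * sm (fun a => if (a + (m + x) <=? N)%nat then ee p q s a else 0) m) L).
  { apply sm_ext. intros x Hx. rewrite <- sm_scal. apply sm_ext. intros a Ha.
    rewrite Nat.add_comm. destruct (a + (m + x) <=? N)%nat; ring. }
  assert (E2: sm (fun x => sm (fun b => if (b + (m + x) <=? N)%nat then ee p q s (m + x) * ee p q s b else 0) m) L
    = sm (fun x => ee p q s (m + x) * sm (fun a => if (a + (m + x) <=? N)%nat then ee p q s a else 0) m) L).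
  { apply sm_ext. intros x Hx. rewrite <- sm_scal. apply sm_ext. intros a Ha. apply if_mult. }
  rewrite E1, E2. ring.
Qed.

Lemma Qb_blocks p q s K N :
  Qb p q s (K * (2*q)) N = 2 * sm (fun k => Inc p q s k N) K + sm (fun k => Dg p q s k N) K.
Proof.
  induction K.
  - unfold Qb. simpl. lra.
  - rewrite Qb_step, IHK. rewrite !sm_S. ring.
Qed.

Lemma inner_eq p q s m d N :
  sm (fun a => if (a + d <=? N)%nat then ee p q s a else 0) m = sm (ee p q s) (Nat.min m (N + 1 - d)).
Proof. apply sm_prefix. Qed.

Lemma Inc_bound p q s K N : (0 < q)%nat -> (p <= q)%nat ->
  Rabs (Inc p q s K N) <= INR (2*q) * INR (2*q).
Proof.
  intros Hq Hp. unfold Inc. apply sm_bound. intros x Hx.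
  rewrite inner_eq. rewrite Rabs_mult.
  pose proof (ee_bound p q s (K * (2 * q) + x) Hq Hp).
  pose proof (Pre_bound p q s (Nat.min (K * (2 * q)) (N + 1 - (K * (2 * q) + x))) Hq Hp).
  pose proof (Rabs_pos (ee p q s (K * (2 * q) + x))).
  pose proof (Rabs_pos (sm (ee p q s) (Nat.min (K * (2 * q)) (N + 1 - (K * (2 * q) + x))))).
  nra.
Qed.

Lemma Inc_zero p q s k N : (0 < q)%nat -> (p <= q)%nat ->
  (2 * (k * (2*q)) + 2*q <= N)%nat -> Inc p q s k N = 0.
Proof.
  intros Hq Hp HN. unfold Inc. apply sm_zero. intros x Hx.
  rewrite inner_eq. rewrite Nat.min_l by lia. rewrite Pre_blk by auto. ring.
Qed.

Definition upd (s : nat -> nat) K u := fun i => if (i =? K)%nat then u else s i.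

Lemma ee_agree p q s s' K a : (0 < q)%nat -> (forall i, (i < K)%nat -> s i = s' i) ->
  (a < K * (2*q))%nat -> ee p q s a = ee p q s' a.
Proof.
  intros Hq H Ha. unfold ee, Aset. rewrite H. reflexivity.
  apply Nat.Div0.div_lt_upper_bound. lia.
Qed.

Lemma Inc_agree p q s s' k N : (0 < q)%nat -> (forall i, (i < S k)%nat -> s i = s' i) ->
  Inc p q s k N = Inc p q s' k N.
Proof.
  intros Hq H. unfold Inc. apply sm_ext. intros x Hx. f_equal.
  - apply (ee_agree p q s s' (S k)); auto. lia.
  - apply sm_ext. intros a Ha. destruct (a + (k * (2 * q) + x) <=? N)%nat; auto.
    apply (ee_agree p q s s' (S k)); auto. lia.
Qed.

Definition Y p q s K N := sm (fun k => Inc p q s k N) K.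

Lemma Y_agree p q s s' K N : (0 < q)%nat -> (forall i, (i < K)%nat -> s i = s' i) ->
  Y p q s K N = Y p q s' K N.
Proof.
  intros Hq H. unfold Y. apply sm_ext. intros k Hk. apply Inc_agree; auto.
  intros; apply H; lia.
Qed.

Lemma Y_zero p q s K N : (0 < q)%nat -> (p <= q)%nat ->
  ((2 * K + 1) * (2 * q) <= N)%nat -> Y p q s K N = 0.
Proof.
  intros Hq Hp HN. unfold Y. apply sm_zero. intros k Hk. apply Inc_zero; auto.
  assert (k * (2*q) + 2*q <= K * (2*q))%nat.
  { replace (k * (2*q) + 2*q)%nat with (S k * (2*q))%nat by lia. apply Nat.mul_le_mono_r. lia. }
  lia.
Qed.

Lemma Inc_upd p q s K u N : (0 < q)%nat ->
  Inc p q (upd s K u) K N =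
  sm (fun x => (ind (pat p q u x) - al p q) *
     sm (fun a => if (a + (K*(2*q) + x) <=? N)%nat then ee p q s a else 0) (K*(2*q))) (2*q).
Proof.
  intros Hq. unfold Inc. apply sm_ext. intros x Hx. f_equal.
  - unfold ee. rewrite Aset_blk by auto. unfold upd. rewrite Nat.eqb_refl. reflexivity.
  - apply sm_ext. intros a Ha. destruct (a + (K * (2 * q) + x) <=? N)%nat; auto.
    symmetry. apply (ee_agree p q s (upd s K u) K); auto.
    intros i Hi. unfold upd. destruct (Nat.eqb_spec i K); auto; lia.
Qed.

Lemma Inc_mean p q s K N : (0 < q)%nat -> (p <= q)%nat ->
  sm (fun u => Inc p q (upd s K u) K N) q = 0.
Proof.
  intros Hq Hp.
  rewrite (sm_ext _ (fun u => sm (fun x => (ind (pat p q u x) - al p q) *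
     sm (fun a => if (a + (K*(2*q) + x) <=? N)%nat then ee p q s a else 0) (K*(2*q))) (2*q)))
    by (intros; apply Inc_upd; auto).
  rewrite sm_swap. apply sm_zero. intros x Hx.
  rewrite (sm_ext _ (fun u => sm (fun a => if (a + (K*(2*q) + x) <=? N)%nat then ee p q s a else 0) (K*(2*q)) * (ind (pat p q u x) - al p q)))
    by (intros; ring).
  rewrite (sm_scal (sm (fun a => if (a + (K*(2*q) + x) <=? N)%nat then ee p q s a else 0) (K*(2*q))) (fun u => ind (pat p q u x) - al p q)).
  rewrite sm_minus, pat_mean, sm_const, al_q by auto. ring.
Qed.

Lemma upd_agree s K u : forall i, (i < K)%nat -> s i = upd s K u i.
Proof. intros i Hi. unfold upd. destruct (Nat.eqb_spec i K); auto; lia. Qed.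

Lemma Y_upd p q s K u N : (0 < q)%nat ->
  Y p q (upd s K u) (S K) N = Y p q s K N + Inc p q (upd s K u) K N.
Proof.
  intros Hq. unfold Y. rewrite sm_S. f_equal. symmetry. apply (Y_agree p q s (upd s K u) K N Hq).
  apply upd_agree.
Qed.

Lemma Dg_zero_lo p q s k N : (0 < q)%nat -> (p <= q)%nat ->
  (2 * (k * (2*q)) + 2 * (2*q) <= N + 2)%nat -> Dg p q s k N = 0.
Proof.
  intros Hq Hp HN. unfold Dg.
  rewrite (sm_ext _ (fun x => ee p q s (k * (2 * q) + x) * sm (fun y => ee p q s (k * (2 * q) + y)) (2*q))).
  - rewrite (sm_ext _ (fun x => ee p q s (k * (2 * q) + x) * 0)).
    + apply sm_zero. intros; ring.
    + intros. rewrite block_sum; auto.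
  - intros x Hx. rewrite <- sm_scal. apply sm_ext. intros y Hy.
    destruct (Nat.leb_spec (k * (2 * q) + y + (k * (2 * q) + x)) N); [auto|lia].
Qed.

Lemma Dg_zero_hi p q s k N : (N < 2 * (k * (2*q)))%nat -> Dg p q s k N = 0.
Proof.
  intros HN. unfold Dg. apply sm_zero. intros x Hx. apply sm_zero. intros y Hy.
  destruct (Nat.leb_spec (k * (2 * q) + y + (k * (2 * q) + x)) N); [lia|auto].
Qed.

Lemma Dg_bound p q s k N : (0 < q)%nat -> (p <= q)%nat ->
  Rabs (Dg p q s k N) <= INR (2*q) * INR (2*q).
Proof.
  intros Hq Hp. unfold Dg. apply sm_bound. intros x Hx.
  eapply Rle_trans. apply sm_bound with (b := 1).
  - intros y Hy. destruct (_ <=? _)%nat.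
    + rewrite Rabs_mult. pose proof (ee_bound p q s (k * (2 * q) + x) Hq Hp).
      pose proof (ee_bound p q s (k * (2 * q) + y) Hq Hp).
      pose proof (Rabs_pos (ee p q s (k * (2 * q) + x))). 
      pose proof (Rabs_pos (ee p q s (k * (2 * q) + y))). nra.
    + rewrite Rabs_R0; lra.
  - lra.
Qed.

Lemma Dg_sum_bound p q s K N : (0 < q)%nat -> (p <= q)%nat ->
  Rabs (sm (fun k => Dg p q s k N) K) <= INR (2*q) * INR (2*q).
Proof.
  intros Hq Hp. set (k0 := (N / (2 * (2*q)))%nat).
  assert (H1: (k0 * (2 * (2*q)) <= N)%nat).
  { unfold k0. rewrite Nat.mul_comm. apply Nat.Div0.mul_div_le. }
  assert (H2: (N < k0 * (2 * (2*q)) + 2 * (2*q))%nat).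
  { unfold k0. pose proof (Nat.div_mod N (2*(2*q))). pose proof (Nat.mod_upper_bound N (2*(2*q))). lia. }
  eapply Rle_trans. apply (sm_single _ K k0).
  - intros k Hk Hne. destruct (Nat.lt_ge_cases k k0).
    + apply Dg_zero_lo; auto.
      assert (S k * (2 * (2*q)) <= k0 * (2 * (2*q)))%nat by (apply Nat.mul_le_mono_r; lia). lia.
    + apply Dg_zero_hi.
      assert (S k0 * (2 * (2*q)) <= k * (2 * (2*q)))%nat by (apply Nat.mul_le_mono_r; lia). lia.
  - apply Dg_bound; auto.
Qed.

Lemma exp_mono x y : x <= y -> exp x <= exp y.
Proof. intros [H|H]. left; apply exp_increasing; auto. subst; lra. Qed.

Lemma ln_mono x y : 0 < x -> x <= y -> ln x <= ln y.
Proof. intros Hx [H|H]. left; apply ln_increasing; auto. subst; lra. Qed.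

Lemma exp_quad y : y <= 1/2 -> exp y <= 1 + y + 2 * y^2.
Proof.
  intros Hy. pose proof (exp_ineq1_le (-y)).
  assert (Hp: 0 < 1 - y) by lra.
  replace y with (- - y) at 1 by ring. rewrite exp_Ropp.
  apply Rle_trans with (/ (1 - y)).
  - apply Rinv_le_contravar; lra.
  - apply (Rmult_le_reg_l (1 - y)); [lra|]. rewrite Rinv_r by lra. nra.
Qed.

Lemma avg_exp (D : nat -> R) n mu c0 : 0 <= c0 -> Rabs mu * c0 <= 1/2 -> sm D n = 0 ->
  (forall u, (u < n)%nat -> Rabs (D u) <= c0) ->
  sm (fun u => exp (mu * D u)) n <= INR n * exp (2 * mu^2 * c0^2).
Proof.
  intros Hc Hmu HD HB.
  apply Rle_trans with (sm (fun u => 1 + mu * D u + 2 * mu^2 * c0^2) n).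
  - apply sm_le. intros u Hu. pose proof (HB u Hu).
    assert (Rabs (mu * D u) <= 1/2).
    { rewrite Rabs_mult. pose proof (Rabs_pos mu). pose proof (Rabs_pos (D u)). nra. }
    eapply Rle_trans. apply exp_quad. pose proof (Rle_abs (mu * D u)). lra.
    assert ((mu * D u)^2 <= mu^2 * c0^2).
    { replace ((mu * D u)^2) with (mu^2 * (Rabs (D u))^2).
      - apply Rmult_le_compat_l. nra. pose proof (Rabs_pos (D u)). nra.
      - rewrite (pow2_abs (D u)). ring. }
    lra.
  - rewrite !sm_plus, sm_scal, HD, !sm_const.
    pose proof (exp_ineq1_le (2 * mu ^ 2 * c0 ^ 2)). pose proof (pos_INR n). nra.
Qed.

Lemma exists_min (F : nat -> R) n : (0 < n)%nat ->
  exists u, (u < n)%nat /\ forall v, (v < n)%nat -> F u <= F v.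
Proof.
  induction n; intros Hn; [lia|].
  destruct n.
  - exists O. split; auto. intros v Hv. replace v with O by lia. lra.
  - destruct IHn as [u [Hu H]]; [lia|].
    destruct (Rle_dec (F u) (F (S n))).
    + exists u. split; [lia|]. intros v Hv. destruct (Nat.eq_dec v (S n)); [subst; auto|]. apply H; lia.
    + exists (S n). split; [lia|]. intros v Hv. destruct (Nat.eq_dec v (S n)); [subst; lra|].
      pose proof (H v ltac:(lia)). lra.
Qed.

Lemma exists_le_avg (F : nat -> R) n : (0 < n)%nat ->
  exists u, (u < n)%nat /\ INR n * F u <= sm F n.
Proof.
  intros Hn. destruct (exists_min F n Hn) as [u [Hu H]]. exists u. split; auto.
  rewrite <- sm_const. apply sm_le. auto.
Qed.

Definition cc q := INR (2*q) * INR (2*q).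
Definition XX N := INR N + 3.
Definition lam q N := sqrt (ln (XX N) * XX N) / (2 * cc q * XX N).
Definition ww N := 1 / ((INR N + 1) * (INR N + 2)).
Definition term p q s K N :=
  ww N * (exp (lam q N * Y p q s K N - 2 * (lam q N)^2 * (cc q)^2 * INR K)
        + exp (- lam q N * Y p q s K N - 2 * (lam q N)^2 * (cc q)^2 * INR K)).
Definition MM q K := ((2*K+1)*(2*q))%nat.
Definition Psi p q s K := sm (term p q s K) (MM q K).

Lemma cc_pos q : (0 < q)%nat -> 0 < cc q.
Proof. intros. unfold cc. assert (0 < INR (2*q)) by (apply lt_0_INR; lia). nra. Qed.

Lemma XX_ge N : 3 <= XX N.
Proof. unfold XX. pose proof (pos_INR N). lra. Qed.

Lemma lnX_pos N : 0 < ln (XX N).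
Proof. rewrite <- ln_1. apply ln_increasing; pose proof (XX_ge N); lra. Qed.

Lemma lnX_le N : ln (XX N) <= XX N.
Proof.
  pose proof (exp_ineq1_le (ln (XX N))). rewrite exp_ln in H by (pose proof (XX_ge N); lra). lra.
Qed.

Lemma lam_props q N : (0 < q)%nat -> 0 < lam q N /\ lam q N * cc q <= 1/2.
Proof.
  intros Hq. pose proof (cc_pos q Hq). pose proof (XX_ge N). pose proof (lnX_pos N). pose proof (lnX_le N).
  unfold lam. set (X := XX N) in *. set (l := ln X) in *.
  assert (Hs: 0 < sqrt (l * X)) by (apply sqrt_lt_R0; apply Rmult_lt_0_compat; lra).
  assert (Hs2: sqrt (l * X) <= X).
  { apply Rle_trans with (sqrt (X*X)); [apply sqrt_le_1_alt; nra | rewrite sqrt_square; lra]. }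
  split.
  - apply Rdiv_lt_0_compat; nra.
  - replace (sqrt (l * X) / (2 * cc q * X) * cc q) with (sqrt (l * X) / (2 * X)) by (field; lra).
    apply (Rmult_le_reg_r (2 * X)); [lra|]. unfold Rdiv. rewrite Rmult_assoc, Rinv_l by lra. lra.
Qed.

Lemma ww_pos N : 0 < ww N.
Proof. unfold ww. pose proof (pos_INR N). apply Rdiv_lt_0_compat; nra. Qed.

Lemma ww_sum n : sm ww n = 1 - 1 / (INR n + 1).
Proof.
  induction n. simpl. lra. rewrite sm_S, IHn, S_INR. unfold ww. pose proof (pos_INR n). field; lra.
Qed.

Lemma ww_sum_le n : sm ww n <= 1.
Proof. rewrite ww_sum. pose proof (pos_INR n). assert (0 < 1 / (INR n + 1)) by (apply Rdiv_lt_0_compat; lra). lra. Qed.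

Lemma term_nonneg p q s K N : 0 <= term p q s K N.
Proof.
  unfold term. pose proof (ww_pos N). pose proof (exp_pos (lam q N * Y p q s K N - 2 * lam q N ^ 2 * cc q ^ 2 * INR K)).
  pose proof (exp_pos (- lam q N * Y p q s K N - 2 * lam q N ^ 2 * cc q ^ 2 * INR K)). nra.
Qed.

Lemma term_upd_sum p q s K N : (0 < q)%nat -> (p <= q)%nat ->
  sm (fun u => term p q (upd s K u) (S K) N) q <= INR q * term p q s K N.
Proof.
  intros Hq Hp. unfold term.
  set (l := lam q N). set (c := cc q). set (Y0 := Y p q s K N).
  set (D := fun u => Inc p q (upd s K u) K N).
  pose proof (lam_props q N Hq) as [Hl1 Hl2]. fold l in Hl1, Hl2. fold c in Hl2.
  pose proof (cc_pos q Hq). fold c in H.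
  rewrite (sm_ext _ (fun u => ww N * (exp (l * Y0 - 2 * l^2 * c^2 * INR K) * exp (- (2 * l^2 * c^2)) * exp (l * D u)
         + exp (- l * Y0 - 2 * l^2 * c^2 * INR K) * exp (- (2 * l^2 * c^2)) * exp (- l * D u)))).
  2: { intros u Hu. rewrite Y_upd by auto. fold Y0. unfold D. rewrite S_INR. rewrite <- !exp_plus. f_equal. f_equal; f_equal; ring. }
  rewrite (sm_scal (ww N)). rewrite sm_plus. rewrite !sm_scal.
  assert (HD0: sm D q = 0) by (apply Inc_mean; auto).
  assert (HDb: forall u, (u < q)%nat -> Rabs (D u) <= c) by (intros; apply Inc_bound; auto).
  pose proof (avg_exp D q l c ltac:(lra) ltac:(rewrite Rabs_right by lra; lra) HD0 HDb) as A1.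
  pose proof (avg_exp D q (-l) c ltac:(lra) ltac:(rewrite Rabs_Ropp, Rabs_right by lra; lra) HD0 HDb) as A2.
  replace ((- l)^2) with (l^2) in A2 by ring.
  assert (Hk: exp (- (2 * l ^ 2 * c ^ 2)) * exp (2 * l ^ 2 * c ^ 2) = 1).
  { rewrite <- exp_plus. replace (- (2 * l ^ 2 * c ^ 2) + 2 * l ^ 2 * c ^ 2) with 0 by ring. apply exp_0. }
  pose proof (ww_pos N).
  set (E1 := exp (l * Y0 - 2 * l ^ 2 * c ^ 2 * INR K)). set (E2 := exp (- l * Y0 - 2 * l ^ 2 * c ^ 2 * INR K)).
  set (G := exp (- (2 * l ^ 2 * c ^ 2))) in *. set (H2 := exp (2 * l ^ 2 * c ^ 2)) in *.
  assert (0 < E1) by apply exp_pos. assert (0 < E2) by apply exp_pos. assert (0 < G) by apply exp_pos.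
  assert (E1 * G * sm (fun u => exp (l * D u)) q <= E1 * G * (INR q * H2)) by (apply Rmult_le_compat_l; nra).
  assert (E2 * G * sm (fun u => exp (- l * D u)) q <= E2 * G * (INR q * H2)) by (apply Rmult_le_compat_l; nra).
  assert (E1 * G * (INR q * H2) + E2 * G * (INR q * H2) = INR q * (E1 + E2)).
  { transitivity (INR q * (E1 + E2) * (G * H2)). ring. rewrite Hk. ring. }
  apply Rle_trans with (ww N * (E1 * G * (INR q * H2) + E2 * G * (INR q * H2))).
  - apply Rmult_le_compat_l; lra.
  - match goal with H: _ = INR q * (E1 + E2) |- _ => rewrite H end. lra.
Qed.

Lemma Psi_step p q s K : (0 < q)%nat -> (p <= q)%nat ->
  exists u, Psi p q (upd s K u) (S K) <= Psi p q s K + 2 * sm (fun i => ww (MM q K + i)) (MM q (S K) - MM q K).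
Proof.
  intros Hq Hp.
  destruct (exists_le_avg (fun u => Psi p q (upd s K u) (S K)) q Hq) as [u [Hu Hle]].
  exists u.
  assert (Hsum: sm (fun u => Psi p q (upd s K u) (S K)) q <= INR q * sm (term p q s K) (MM q (S K))).
  { unfold Psi. rewrite (sm_swap (fun u N => term p q (upd s K u) (S K) N)).
    rewrite <- sm_scal. apply sm_le. intros. apply term_upd_sum; auto. }
  assert (Hsplit: sm (term p q s K) (MM q (S K)) <= Psi p q s K + 2 * sm (fun i => ww (MM q K + i)) (MM q (S K) - MM q K)).
  { unfold Psi. replace (MM q (S K)) with (MM q K + (MM q (S K) - MM q K))%nat by (unfold MM; lia).
    rewrite sm_split. replace (MM q K + (MM q (S K) - MM q K) - MM q K)%nat with (MM q (S K) - MM q K)%nat by lia.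
    rewrite <- sm_scal. apply Rplus_le_compat_l. apply sm_le. intros i Hi.
    unfold term. rewrite Y_zero by (auto; unfold MM; lia).
    pose proof (ww_pos (MM q K + i)).
    set (a := 2 * lam q (MM q K + i) ^ 2 * cc q ^ 2 * INR K).
    assert (0 <= a).
    { unfold a. apply Rmult_le_pos; [apply Rmult_le_pos; [apply Rmult_le_pos|]|]; try lra; try apply pow2_ge_0; try apply pos_INR. }
    replace (lam q (MM q K + i) * 0 - a) with (-a) by ring.
    replace (- lam q (MM q K + i) * 0 - a) with (-a) by ring.
    assert (exp (-a) <= 1) by (rewrite <- exp_0; apply exp_mono; lra). nra. }
  assert (0 < INR q) by (apply lt_0_INR; auto).
  apply (Rmult_le_reg_l (INR q)); auto. nra.
Qed.

Lemma Psi_agree p q s s' K : (0 < q)%nat -> (forall i, (i < K)%nat -> s i = s' i) ->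
  Psi p q s K = Psi p q s' K.
Proof.
  intros Hq H. unfold Psi. apply sm_ext. intros N HN. unfold term.
  rewrite (Y_agree p q s s' K N Hq H). reflexivity.
Qed.

Definition choose p q (Hq : (0 < q)%nat) (Hp : (p <= q)%nat) s K : nat :=
  proj1_sig (constructive_indefinite_description _ (Psi_step p q s K Hq Hp)).

Lemma choose_spec p q Hq Hp s K :
  Psi p q (upd s K (choose p q Hq Hp s K)) (S K) <=
  Psi p q s K + 2 * sm (fun i => ww (MM q K + i)) (MM q (S K) - MM q K).
Proof. unfold choose. destruct (constructive_indefinite_description _ _). simpl. auto. Qed.

Fixpoint pre p q Hq Hp K : nat -> nat :=
  match K with
  | O => fun _ => O
  | S K' => upd (pre p q Hq Hp K') K' (choose p q Hq Hp (pre p q Hq Hp K') K')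
  end.

Definition sfin p q Hq Hp i := pre p q Hq Hp (S i) i.

Lemma pre_S p q Hq Hp K i : (i < K)%nat -> pre p q Hq Hp (S K) i = pre p q Hq Hp K i.
Proof. intros H. simpl. symmetry. apply upd_agree. auto. Qed.

Lemma pre_stable p q Hq Hp K i : (i < K)%nat -> pre p q Hq Hp K i = sfin p q Hq Hp i.
Proof.
  intros H. unfold sfin. induction K; [lia|].
  destruct (Nat.eq_dec i K). subst; auto.
  rewrite pre_S by lia. apply IHK. lia.
Qed.

Lemma Psi_pre p q Hq Hp K : Psi p q (pre p q Hq Hp K) K <= 2 * sm ww (MM q K).
Proof.
  induction K.
  - unfold Psi. apply Req_le. rewrite <- sm_scal. apply sm_ext. intros N HN.
    unfold term, Y. simpl sm. simpl INR.
    replace (lam q N * 0 - 2 * lam q N ^ 2 * cc q ^ 2 * 0) with 0 by ring.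
    replace (- lam q N * 0 - 2 * lam q N ^ 2 * cc q ^ 2 * 0) with 0 by ring.
    rewrite exp_0. ring.
  - simpl pre. eapply Rle_trans. apply choose_spec.
    replace (MM q (S K)) with (MM q K + (MM q (S K) - MM q K))%nat at 2 by (unfold MM; lia).
    rewrite sm_split. lra.
Qed.

Lemma Psi_fin p q Hq Hp K : Psi p q (sfin p q Hq Hp) K <= 2.
Proof.
  rewrite (Psi_agree p q _ (pre p q Hq Hp K) K Hq).
  - eapply Rle_trans. apply Psi_pre. pose proof (ww_sum_le (MM q K)). lra.
  - intros. symmetry. apply pre_stable. auto.
Qed.

Lemma Ybound q N (Yv K : R) : (0 < q)%nat -> 0 <= K <= XX N ->
  ww N * (exp (lam q N * Yv - 2 * (lam q N)^2 * (cc q)^2 * K)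
        + exp (- lam q N * Yv - 2 * (lam q N)^2 * (cc q)^2 * K)) <= 2 ->
  Rabs Yv <= 7 * cc q * sqrt (ln (XX N) * XX N).
Proof.
  intros Hq HK H.
  pose proof (lam_props q N Hq) as [Hl1 Hl2]. pose proof (cc_pos q Hq). pose proof (XX_ge N).
  pose proof (lnX_pos N). pose proof (ww_pos N).
  set (X := XX N) in *. set (l := ln X) in *. set (c := cc q) in *. set (la := lam q N) in *.
  set (Z := sqrt (l * X)).
  assert (HZ2 : Z * Z = l * X) by (apply sqrt_sqrt; nra).
  assert (HZ : 0 < Z) by (apply sqrt_lt_R0; nra).
  assert (Hla : la = Z / (2 * c * X)) by reflexivity.
  set (a := 2 * la ^ 2 * c ^ 2 * K) in *.
  assert (G1 : exp (la * Rabs Yv - a) <= 2 / ww N).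
  { apply (Rmult_le_reg_l (ww N)); auto. unfold Rdiv. rewrite <- Rmult_assoc, (Rmult_comm (ww N) 2), Rmult_assoc, Rinv_r by lra.
    pose proof (exp_pos (la * Yv - a)). pose proof (exp_pos (- la * Yv - a)).
    destruct (Rle_dec 0 Yv).
    - rewrite Rabs_right by lra. nra.
    - rewrite Rabs_left by lra. replace (la * - Yv - a) with (- la * Yv - a) by ring. nra. }
  assert (G2 : 2 / ww N <= 2 * (X * X)).
  { unfold ww. unfold X, XX. pose proof (pos_INR N).
    replace (2 / (1 / ((INR N + 1) * (INR N + 2)))) with (2 * ((INR N + 1) * (INR N + 2))) by (field; nra). nra. }
  assert (G3 : la * Rabs Yv - a <= 3 * l).
  { rewrite <- (ln_exp (la * Rabs Yv - a)).
    apply Rle_trans with (ln (2 * (X * X))).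
    - apply ln_mono. apply exp_pos. lra.
    - rewrite !ln_mult by nra. fold l. pose proof (ln_mono 2 X ltac:(lra) ltac:(lra)). fold l in H4. lra. }
  assert (Ha : a <= l / 2).
  { unfold a. assert (la ^ 2 * c ^ 2 = l / (4 * X)).
    { rewrite Hla. replace ((Z / (2 * c * X)) ^ 2 * c ^ 2) with (Z * Z / (4 * X * X)) by (field; lra).
      rewrite HZ2. field. lra. }
    replace (2 * la ^ 2 * c ^ 2 * K) with (2 * (la ^ 2 * c ^ 2) * K) by ring. rewrite H4.
    apply Rle_trans with (2 * (l / (4 * X)) * X).
    - apply Rmult_le_compat_l; [|lra]. apply Rmult_le_pos; [lra|]. apply Rlt_le, Rdiv_lt_0_compat; lra.
    - field_simplify; lra. }
  assert (Hr : la * (7 * c * Z) = 7 * l / 2).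
  { rewrite Hla. replace (Z / (2 * c * X) * (7 * c * Z)) with (7 * (Z * Z) / (2 * X)) by (field; lra).
    rewrite HZ2. field. lra. }
  apply (Rmult_le_reg_l la); auto. rewrite Hr. lra.
Qed.

Lemma len_filter (g : nat -> bool) k :
  INR (length (filter g (seq 0 k))) = sm (fun a => if g a then 1 else 0) k.
Proof.
  induction k. reflexivity.
  rewrite seq_S, filter_app, length_app, plus_INR, IHk. simpl. destruct (g k); simpl; lra.
Qed.

Lemma triangle (f : nat -> nat -> R) N :
  sm (fun n => sm (fun a => f a (n - a)%nat) (S n)) (S N) = Tri f N.
Proof.
  induction N.
  - unfold Tri. simpl. lra.
  - rewrite sm_S, IHN. unfold Tri.
    replace (S N + 1)%nat with (S (N + 1)) by lia.
    rewrite (sm_ext (fun a => sm (fun b => f a b) (S (N + 1) - a))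
                    (fun a => sm (fun b => f a b) (N + 1 - a) + f a (S N - a)%nat)).
    + rewrite sm_plus. rewrite (sm_S (fun a => sm (fun b => f a b) (N + 1 - a))).
      replace (N + 1 - (N + 1))%nat with O by lia. simpl (sm _ 0).
      replace (N + 1)%nat with (S N) by lia. lra.
    + intros a Ha. replace (S (N + 1) - a)%nat with (S (N + 1 - a)) by lia. rewrite sm_S.
      f_equal. f_equal. lia.
Qed.

Lemma Tri_ext f g N : (forall a b, f a b = g a b) -> Tri f N = Tri g N.
Proof. intros H. unfold Tri. apply sm_ext. intros. apply sm_ext. intros. auto. Qed.

Lemma sumRA_Tri p q s N :
  sumRA (Aset p q s) N = Tri (fun a b => ind (Aset p q s a) * ind (Aset p q s b)) N.
Proof.
  unfold sumRA. rewrite sum_f_R0_sm. rewrite <- triangle. apply sm_ext. intros n Hn.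
  unfold RA. rewrite len_filter. apply sm_ext. intros a Ha.
  unfold ind. destruct (Aset p q s a); destruct (Aset p q s (n - a)); simpl; ring.
Qed.

Lemma err_decomp p q s N : (0 < q)%nat -> (p <= q)%nat ->
  sumRA (Aset p q s) N = al p q ^ 2 * (INR (N+1) * INR (N+2) / 2) + 2 * al p q * W p q s (N+1)
    + 2 * Y p q s (S (N / (2*q))) N + sm (fun k => Dg p q s k N) (S (N / (2*q))).
Proof.
  intros Hq Hp. rewrite sumRA_Tri.
  rewrite (Tri_ext _ (fun a b => (al p q ^ 2 * 1 + al p q * ee p q s b) + al p q * ee p q s a + ee p q s a * ee p q s b)).
  2: { intros a b. unfold ee. ring. }
  rewrite !Tri_plus, !Tri_scal. rewrite Tri_one, Tri_left, Tri_right.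
  rewrite (Tri_Qb p q s N (S (N / (2*q)) * (2*q))).
  - rewrite Qb_blocks. unfold Y. ring.
  - pose proof (Nat.div_mod N (2*q)). pose proof (Nat.mod_upper_bound N (2*q)). nia.
Qed.

Lemma S_bounds N : (3 <= N)%nat ->
  1 <= sqrt (INR N) * sqrt (ln (INR N)) /\
  sqrt (ln (XX N) * XX N) <= 2 * (sqrt (INR N) * sqrt (ln (INR N))).
Proof.
  intros HN. assert (H3: 3 <= INR N) by (replace 3 with (INR 3) by (simpl; lra); apply le_INR; auto).
  assert (Hl1: 1 <= ln (INR N)).
  { rewrite <- (ln_exp 1). apply ln_mono. apply exp_pos. pose proof exp_le_3. lra. }
  split.
  - rewrite <- (Rmult_1_l 1). apply Rmult_le_compat; try lra.
    + rewrite <- sqrt_1. apply sqrt_le_1_alt. lra.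
    + rewrite <- sqrt_1. apply sqrt_le_1_alt. lra.
  - assert (E: (2 * (sqrt (INR N) * sqrt (ln (INR N))))^2 = 4 * (INR N * ln (INR N))).
    { replace ((2 * (sqrt (INR N) * sqrt (ln (INR N))))^2) with
        (4 * ((sqrt (INR N) * sqrt (INR N)) * (sqrt (ln (INR N)) * sqrt (ln (INR N))))) by ring.
      rewrite !sqrt_sqrt by lra. ring. }
    assert (P: 0 <= 2 * (sqrt (INR N) * sqrt (ln (INR N)))).
    { pose proof (sqrt_pos (INR N)). pose proof (sqrt_pos (ln (INR N))). nra. }
    rewrite <- (sqrt_pow2 (2 * (sqrt (INR N) * sqrt (ln (INR N))))) by auto.
    apply sqrt_le_1_alt. rewrite E. unfold XX.
    assert (ln (INR N + 3) <= 2 * ln (INR N)).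
    { apply Rle_trans with (ln (2 * INR N)). apply ln_mono; lra.
      rewrite ln_mult by lra. pose proof (ln_mono 2 (INR N) ltac:(lra) ltac:(lra)). lra. }
    assert (0 <= ln (INR N + 3)) by (rewrite <- ln_1; apply ln_mono; lra).
    nra.
Qed.

Theorem theorem6 (p q : Z) (hp : (0 < p)%Z) (hpq : (p < q)%Z) :
  exists A : nat -> bool, exists C : R, exists N0 : nat,
    forall N : nat, (N0 <= N)%nat ->
      Rabs (sumRA A N
            - ((1/2) * (IZR p ^ 2 / IZR q ^ 2) * INR N ^ 2
               + (3/2) * (IZR p ^ 2 / IZR q ^ 2) * INR N))
      <= C * (sqrt (INR N) * sqrt (ln (INR N))).
Proof.
  set (pn := Z.to_nat p). set (qn := Z.to_nat q).
  assert (Hq : (0 < qn)%nat) by (unfold qn; lia).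
  assert (Hp : (pn <= qn)%nat) by (unfold pn, qn; lia).
  assert (Ep : IZR p = INR pn) by (unfold pn; rewrite INR_IZR_INZ; rewrite Z2Nat.id by lia; auto).
  assert (Eq : IZR q = INR qn) by (unfold qn; rewrite INR_IZR_INZ; rewrite Z2Nat.id by lia; auto).
  clearbody pn qn.
  set (s := sfin pn qn Hq Hp).
  exists (Aset pn qn s), (1 + 3 * cc qn + 28 * cc qn), 3%nat.
  intros N HN.
  rewrite err_decomp by auto.
  set (K := S (N / (2 * qn))).
  assert (HKN : (N < K * (2 * qn))%nat).
  { unfold K. pose proof (Nat.div_mod N (2*qn)). pose proof (Nat.mod_upper_bound N (2*qn)). nia. }
  assert (HK1 : (K <= N + 1)%nat).
  { unfold K. assert (N / (2 * qn) <= N)%nat by (apply Nat.Div0.div_le_upper_bound; replace N with (1 * N)%nat at 1 by lia; apply Nat.mul_le_mono_r; lia). lia. }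
  assert (HY : Rabs (Y pn qn s K N) <= 7 * cc qn * sqrt (ln (XX N) * XX N)).
  { apply (Ybound qn N (Y pn qn s K N) (INR K) Hq).
    - split. apply pos_INR. unfold XX. apply le_INR in HK1. rewrite plus_INR in HK1. change (INR 1) with 1 in HK1. lra.
    - fold (term pn qn s K N). eapply Rle_trans; [|apply (Psi_fin pn qn Hq Hp K)].
      unfold Psi. apply sm_term_le. intros; apply term_nonneg. unfold MM. nia. }
  assert (HW : Rabs (W pn qn s (N + 1)) <= cc qn) by (apply W_bound; auto).
  assert (HD : Rabs (sm (fun k => Dg pn qn s k N) K) <= cc qn) by (apply Dg_sum_bound; auto).
  pose proof (al_bounds pn qn Hq Hp) as Hal.
  pose proof (S_bounds N HN) as [HS1 HS2].
  pose proof (cc_pos qn Hq).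
  set (S0 := sqrt (INR N) * sqrt (ln (INR N))) in *.
  set (Z0 := sqrt (ln (XX N) * XX N)) in *.
  assert (Etarget : (1/2) * (IZR p ^ 2 / IZR q ^ 2) * INR N ^ 2 + (3/2) * (IZR p ^ 2 / IZR q ^ 2) * INR N
     = al pn qn ^ 2 * (INR (N+1) * INR (N+2) / 2) - al pn qn ^ 2).
  { rewrite Ep, Eq. unfold al. rewrite !plus_INR. simpl (INR 1). simpl (INR 2).
    assert (0 < INR qn) by (apply lt_0_INR; auto). field. lra. }
  rewrite Etarget.
  set (a := al pn qn) in *.
  replace (a ^ 2 * (INR (N + 1) * INR (N + 2) / 2) + 2 * a * W pn qn s (N + 1) + 2 * Y pn qn s K N +
     sm (fun k => Dg pn qn s k N) K - (a ^ 2 * (INR (N + 1) * INR (N + 2) / 2) - a ^ 2))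
    with (a ^ 2 + 2 * a * W pn qn s (N + 1) + 2 * Y pn qn s K N + sm (fun k => Dg pn qn s k N) K) by ring.
  eapply Rle_trans. apply Rabs_triang.
  eapply Rle_trans. apply Rplus_le_compat_r. apply Rabs_triang.
  eapply Rle_trans. apply Rplus_le_compat_r. apply Rplus_le_compat_r. apply Rabs_triang.
  rewrite !Rabs_mult. rewrite (Rabs_right 2) by lra. rewrite (Rabs_right a) by lra.
  rewrite <- RPow_abs. rewrite (Rabs_right a) by lra.
  assert (Z0 <= 2 * S0) by auto.
  assert (0 <= Z0) by apply sqrt_pos.
  assert (a ^ 2 <= 1) by nra.
  assert (a * Rabs (W pn qn s (N + 1)) <= cc qn) by (pose proof (Rabs_pos (W pn qn s (N + 1))); nra).
  nra.
Qed.
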